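(* For every $n\ge 2$ we have $\mathrm{OT}_n(\mathbb{C})\subseteq\mathrm{ODECO}_n(\mathbb{C})\subseteq\overline{\mathrm{OT}_n(\mathbb{C})}$, and the first inclusion is strict for every $n\ge 2$.
   Context: Associate to $T\in\mathbb{C}^{n\times n\times n}$ the trilinear form $t(x,y,z)=\sum_{i,j,k}T_{ijk}x_iy_jz_k$. $\mathrm{OT}_n(\mathbb{C})$ is the set of tensors whose trilinear form can be written $t(x,y,z)=g(Ax,By,Cz)$ with $A,B,C$ complex orthogonal ($A^TA=\mathrm{Id}$ etc.) and $g=\sum_{i=1}^n\alpha_ix_iy_iz_i$. On $\mathbb{C}^n$ use the bilinear form $\langle x,y\rangle=\sum_ix_iy_i$. $\mathrm{ODECO}_n(\mathbb{C})$ is the set of tensors that can be written $\sum_{j=1}^k u_j\otimes v_j\otimes w_j$ where each of the lists $(u_1,\dots,u_k)$, $(v_1,\dots,v_k)$, $(w_1,\dots,w_k)$ consists of $k$ linearly independent, pairwise orthogonal (w.r.t. $\langle\cdot,\cdot\rangle$) vectors of $\mathbb{C}^n$. Closure is in the Euclidean topology of $\mathbb{C}^{n\times n\times n}$. *)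

(* Defs.v *)
From Stdlib Require Import Reals.
Open Scope R_scope.

Record C : Type := mkC { re : R; im : R }.

Definition C0 : C := mkC 0 0.
Definition C1 : C := mkC 1 0.
Definition Cadd (z w : C) : C := mkC (re z + re w) (im z + im w).
Definition Copp (z : C) : C := mkC (- re z) (- im z).
Definition Csub (z w : C) : C := Cadd z (Copp w).
Definition Cmul (z w : C) : C :=
  mkC (re z * re w - im z * im w) (re z * im w + im z * re w).
Definition Cnorm2 (z : C) : R := re z * re z + im z * im z.

Fixpoint Csum (n : nat) (f : nat -> C) : C :=
  match n with
  | O => C0
  | S m => Cadd (Csum m f) (f m)
  end.

Fixpoint Rsum (n : nat) (f : nat -> R) : R :=
  match n with
  | O => 0
  | S m => Rsum m f + f m
  end.

Definition vec := nat -> C.            (* element of C^n : entries x i, i < n *)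
Definition mat := nat -> nat -> C.
Definition tensor := nat -> nat -> nat -> C.

Definition bil (n : nat) (x y : vec) : C := Csum n (fun i => Cmul (x i) (y i)).

Definition mat_vec (n : nat) (A : mat) (x : vec) : vec :=
  fun i => Csum n (fun j => Cmul (A i j) (x j)).

Definition delta (i j : nat) : C := if Nat.eqb i j then C1 else C0.

Definition orthogonal_mat (n : nat) (A : mat) : Prop :=
  forall i j, (i < n)%nat -> (j < n)%nat ->
    Csum n (fun k => Cmul (A k i) (A k j)) = delta i j.

Definition trilin (n : nat) (T : tensor) (x y z : vec) : C :=
  Csum n (fun i => Csum n (fun j => Csum n (fun k =>
    Cmul (Cmul (Cmul (T i j k) (x i)) (y j)) (z k)))).

Definition diag_trilin (n : nat) (alpha : vec) (x y z : vec) : C :=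
  Csum n (fun i => Cmul (Cmul (Cmul (alpha i) (x i)) (y i)) (z i)).

Definition OT (n : nat) (T : tensor) : Prop :=
  exists (A B Cm : mat) (alpha : vec),
    orthogonal_mat n A /\ orthogonal_mat n B /\ orthogonal_mat n Cm /\
    forall x y z : vec,
      trilin n T x y z =
      diag_trilin n alpha (mat_vec n A x) (mat_vec n B y) (mat_vec n Cm z).

Definition lin_indep (n k : nat) (u : nat -> vec) : Prop :=
  forall c : nat -> C,
    (forall a, (a < n)%nat -> Csum k (fun j => Cmul (c j) (u j a)) = C0) ->
    forall j, (j < k)%nat -> c j = C0.

Definition pairwise_orth (n k : nat) (u : nat -> vec) : Prop :=
  forall j j', (j < k)%nat -> (j' < k)%nat -> j <> j' -> bil n (u j) (u j') = C0.

Definition ODECO (n : nat) (T : tensor) : Prop :=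
  exists (k : nat) (u v w : nat -> vec),
    lin_indep n k u /\ lin_indep n k v /\ lin_indep n k w /\
    pairwise_orth n k u /\ pairwise_orth n k v /\ pairwise_orth n k w /\
    forall a b c, (a < n)%nat -> (b < n)%nat -> (c < n)%nat ->
      T a b c = Csum k (fun j => Cmul (Cmul (u j a) (v j b)) (w j c)).

Definition tdist (n : nat) (S T : tensor) : R :=
  sqrt (Rsum n (fun i => Rsum n (fun j => Rsum n (fun k =>
    Cnorm2 (Csub (S i j k) (T i j k)))))).

Definition in_closure (n : nat) (P : tensor -> Prop) (T : tensor) : Prop :=
  forall eps : R, 0 < eps -> exists T', P T' /\ tdist n T T' < eps.

(* Main.v *)
Require Import Defs.
From Stdlib Require Import Reals Lra Lia Classical.

Open Scope R_scope.

Definition contC (f : R -> Defs.C) :=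
  continuity_pt (fun s => re (f s)) 0 /\ continuity_pt (fun s => im (f s)) 0.

Lemma contC_const z : contC (fun _ => z).
Proof. split; apply continuity_pt_const; intros x y; reflexivity. Qed.

Lemma contC_id : contC (fun s => mkC s 0).
Proof.
split; simpl.
- apply derivable_continuous_pt; apply derivable_pt_id.
- apply continuity_pt_const; intros x y; reflexivity.
Qed.

Lemma contC_add f g : contC f -> contC g -> contC (fun s => Cadd (f s) (g s)).
Proof.
intros [f1 f2] [g1 g2]; split; simpl.
- apply (continuity_pt_plus (fun s => re (f s)) (fun s => re (g s))); auto.
- apply (continuity_pt_plus (fun s => im (f s)) (fun s => im (g s))); auto.
Qed.

Lemma contC_mul f g : contC f -> contC g -> contC (fun s => Cmul (f s) (g s)).
Proof.
intros [f1 f2] [g1 g2]; split; simpl.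
- apply (continuity_pt_minus (fun s => re (f s) * re (g s)) (fun s => im (f s) * im (g s)));
  apply continuity_pt_mult; auto.
- apply (continuity_pt_plus (fun s => re (f s) * im (g s)) (fun s => im (f s) * re (g s)));
  apply continuity_pt_mult; auto.
Qed.

Lemma contC_opp f : contC f -> contC (fun s => Copp (f s)).
Proof.
intros [f1 f2]; split; simpl.
- apply (continuity_pt_opp (fun s => re (f s))); auto.
- apply (continuity_pt_opp (fun s => im (f s))); auto.
Qed.

Lemma contC_sub f g : contC f -> contC g -> contC (fun s => Csub (f s) (g s)).
Proof. intros hf hg; unfold Csub; apply contC_add; auto; apply contC_opp; auto. Qed.

Lemma contC_sum n (f : nat -> R -> Defs.C) :
  (forall i, contC (f i)) -> contC (fun s => Csum n (fun i => f i s)).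
Proof.
intros H; induction n as [|n IH]; simpl.
- apply contC_const.
- apply (contC_add (fun s => Csum n (fun i => f i s)) (f n)); auto.
Qed.

Lemma cont_norm2 f : contC f -> continuity_pt (fun s => Cnorm2 (f s)) 0.
Proof.
intros [f1 f2]; unfold Cnorm2.
apply (continuity_pt_plus (fun s => re (f s) * re (f s)) (fun s => im (f s) * im (f s)));
apply continuity_pt_mult; auto.
Qed.

Lemma cont_Rsum n (g : nat -> R -> R) :
  (forall i, continuity_pt (g i) 0) -> continuity_pt (fun s => Rsum n (fun i => g i s)) 0.
Proof.
intros H; induction n as [|n IH]; simpl.
- apply continuity_pt_const; intros x y; reflexivity.
- apply (continuity_pt_plus (fun s => Rsum n (fun i => g i s)) (g n)); auto.
Qed.

Lemma small_value (F : R -> R) : continuity_pt F 0 -> F 0 = 0 ->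
  forall eps, 0 < eps -> exists s, s <> 0 /\ F s < eps.
Proof.
intros Hc H0 eps He.
destruct (Hc eps He) as [alp [Ha H]].
exists (alp / 2); split; [lra|].
assert (Hd : dist R_met (F (alp / 2)) (F 0) < eps).
{ apply H; split.
  - split; [exact I| lra].
  - simpl; unfold R_dist; rewrite Rabs_right; lra. }
simpl in Hd; unfold R_dist in Hd; rewrite H0 in Hd.
pose proof (Rle_abs (F (alp/2) - 0)); lra.
Qed.

Lemma Rsum_zero n (g : nat -> R) : (forall i, (i < n)%nat -> g i = 0) -> Rsum n g = 0.
Proof.
intros H; induction n as [|n IH]; simpl; [reflexivity|].
rewrite IH; [rewrite H; [ring| lia] | intros i Hi; apply H; lia].
Qed.

Lemma Cnorm2_sub_eq z w : z = w -> Cnorm2 (Csub z w) = 0.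
Proof. intros ->; unfold Cnorm2, Csub, Cadd, Copp; simpl; ring. Qed.

Lemma tdist_small n (T : tensor) (Ts : R -> tensor) :
  (forall a b c, contC (fun s => Ts s a b c)) ->
  (forall a b c, (a < n)%nat -> (b < n)%nat -> (c < n)%nat -> Ts 0 a b c = T a b c) ->
  forall eps, 0 < eps -> exists s, s <> 0 /\ tdist n T (Ts s) < eps.
Proof.
intros Hc H0.
assert (Hz : Rsum n (fun i => Rsum n (fun j => Rsum n (fun k =>
    Cnorm2 (Csub (T i j k) (Ts 0 i j k))))) = 0).
{ apply Rsum_zero; intros i Hi; apply Rsum_zero; intros j Hj; apply Rsum_zero; intros k Hk.
  apply Cnorm2_sub_eq; symmetry; apply H0; auto. }
apply (small_value (fun s => tdist n T (Ts s))).
- unfold tdist.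
  apply (continuity_pt_comp (fun s => Rsum n (fun i => Rsum n (fun j => Rsum n (fun k =>
    Cnorm2 (Csub (T i j k) (Ts s i j k)))))) sqrt).
  + apply cont_Rsum; intro i; apply cont_Rsum; intro j; apply cont_Rsum; intro k.
    apply cont_norm2; apply contC_sub; [apply contC_const | apply Hc].
  + rewrite Hz; apply continuity_pt_sqrt; lra.
- unfold tdist; rewrite Hz; apply sqrt_0.
Qed.

Close Scope R_scope.

From HB Require Import structures.
From mathcomp Require Import all_boot all_order all_algebra.
From mathcomp Require Import Rstruct ring.
From mathcomp.real_closed Require Import complex.
Set Implicit Arguments. Unset Strict Implicit. Unset Printing Implicit Defensive.
Import Order.TTheory GRing.Theory Num.Theory.
Local Open Scope ring_scope.


Definition dot (F : numClosedFieldType) n (x y : 'rV[F]_n) : F := (x *m y^T) 0 0.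

Lemma dotC (F : numClosedFieldType) n (x y : 'rV[F]_n) : dot x y = dot y x.
Proof.
rewrite /dot; have ->: y *m x^T = (x *m y^T)^T by rewrite trmx_mul trmxK.
by rewrite [RHS]mxE.
Qed.

Lemma dotDl (F : numClosedFieldType) n (x y z : 'rV[F]_n) : dot (x + y) z = dot x z + dot y z.
Proof. by rewrite /dot mulmxDl mxE. Qed.
Lemma dotDr (F : numClosedFieldType) n (x y z : 'rV[F]_n) : dot z (x + y) = dot z x + dot z y.
Proof. by rewrite /dot linearD mulmxDr mxE. Qed.
Lemma dotZl (F : numClosedFieldType) n a (x y : 'rV[F]_n) : dot (a *: x) y = a * dot x y.
Proof. by rewrite /dot -scalemxAl mxE. Qed.
Lemma dotZr (F : numClosedFieldType) n a (x y : 'rV[F]_n) : dot y (a *: x) = a * dot y x.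
Proof. by rewrite dotC dotZl dotC. Qed.
Lemma dotNl (F : numClosedFieldType) n (x y : 'rV[F]_n) : dot (- x) y = - dot x y.
Proof. by rewrite -scaleN1r dotZl mulN1r. Qed.
Lemma dotBl (F : numClosedFieldType) n (x y z : 'rV[F]_n) : dot (x - y) z = dot x z - dot y z.
Proof. by rewrite dotDl dotNl. Qed.
Lemma dot0l (F : numClosedFieldType) n (y : 'rV[F]_n) : dot 0 y = 0.
Proof. by rewrite /dot mul0mx mxE. Qed.
Lemma dotE (F : numClosedFieldType) n (x y : 'rV[F]_n) : dot x y = \sum_i x 0 i * y 0 i.
Proof. by rewrite /dot mxE; apply: eq_bigr => i _; rewrite mxE. Qed.
Lemma dot_delta (F : numClosedFieldType) n (x : 'rV[F]_n) j : dot x (delta_mx 0 j) = x 0 j.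
Proof.
rewrite dotE (bigD1 j) //= big1 ?addr0; first by rewrite mxE !eqxx mulr1.
by move=> i /negPf ij; rewrite mxE ij andbF mulr0.
Qed.

Lemma mulmx_tr_dot (F : numClosedFieldType) m k n (A : 'M[F]_(m, n)) (B : 'M[F]_(k, n)) i j :
  (A *m B^T) i j = dot (row i A) (row j B).
Proof.
rewrite /dot !mxE; apply: eq_bigr => l _; by rewrite !mxE.
Qed.


Lemma exists_noniso (F : numClosedFieldType) n m (P : 'M[F]_(m, n)) : (m < n)%N -> P *m P^T = 1%:M ->
  exists y : 'rV[F]_n, y *m P^T = 0 /\ dot y y != 0.
Proof.
move=> ltmn PP.
have rk : (0 < \rank (kermx P^T))%N.
  rewrite mxrank_ker subn_gt0 (leq_ltn_trans _ ltmn) //; exact: rank_leq_col.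
have [i wn0] : exists i, row i (kermx P^T) != 0.
  apply/existsP; apply: contraLR rk; rewrite negb_exists => /forallP Hr.
  have -> : kermx P^T = 0.
    by apply/row_matrixP => i; rewrite row0; apply/eqP; move: (Hr i); rewrite negbK.
  by rewrite mxrank0.
set w := row i (kermx P^T) in wn0.
have hw : w *m P^T = 0 by rewrite /w -row_mul mulmx_ker row0.
case: (classic (exists y : 'rV[F]_n, y *m P^T = 0 /\ dot y y != 0)) => // Hn.
have H : forall y : 'rV[F]_n, y *m P^T = 0 -> dot y y = 0.
  move=> y hy; apply/eqP; apply: negbNE; apply/negP => hyy; apply: Hn; by exists y.
clearbody w.
have wz : forall j, w 0 j = 0.
  move=> j; rewrite -dot_delta.
  set e := delta_mx 0 j : 'rV[F]_n.
  set z1 := (e *m P^T) *m P.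
  set z2 := e - z1.
  have ez : e = z1 + z2 by rewrite /z2 addrC subrK.
  have d1 : dot w z1 = 0.
    by rewrite /dot /z1 trmx_mul mulmxA hw mul0mx mxE.
  have hz2 : z2 *m P^T = 0.
    by rewrite /z2 /z1 mulmxBl -!mulmxA PP mulmx1 subrr.
  clearbody z2 z1 e.
  have d2 : dot w z2 = 0.
    have := H (w + z2); rewrite mulmxDl hw hz2 addr0 => /(_ erefl).
    rewrite !dotDl !dotDr H // [dot z2 w]dotC H // addr0 add0r -mulr2n => /eqP.
    by rewrite mulrn_eq0 /= => /eqP.
  by rewrite ez dotDr d1 d2 addr0.
exfalso; by move/eqP: wn0; apply; apply/rowP => j; rewrite wz mxE.
Qed.

Definition orthonormal (F : numClosedFieldType) n m (a : nat -> 'rV[F]_n) :=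
  forall i j, (i < m)%N -> (j < m)%N -> dot (a i) (a j) = (i == j)%:R.

Lemma extend_orthonormal (F : numClosedFieldType) n d : forall m (a : nat -> 'rV[F]_n), (m + d = n)%N ->
  orthonormal m a ->
  exists b : nat -> 'rV[F]_n, (forall i, (i < m)%N -> b i = a i) /\ orthonormal n b.
Proof.
elim: d => [|d IH] m a hmn ha.
  by rewrite addn0 in hmn; subst m; exists a.
pose P := \matrix_(i < m) a i.
have PP : P *m P^T = 1%:M.
  apply/matrixP => i j; rewrite mulmx_tr_dot !rowK ha // mxE.
  by [].
have ltmn : (m < n)%N by rewrite -hmn addnS ltnS leq_addr.
have [y [hy yy]] := exists_noniso ltmn PP.
have hay : forall i, (i < m)%N -> dot (a i) y = 0.
  move=> i lim; have := congr1 (fun M : 'M[F]_(1,m) => M 0 (Ordinal lim)) hy.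
  rewrite /= mulmx_tr_dot rowK mxE dotC.
  have ->: row 0 y = y by apply/rowP => k; rewrite !mxE.
  by [].
pose r := sqrtC (dot y y).
have r0 : r != 0 by rewrite /r sqrtC_eq0.
pose a' := fun i => if i == m then r^-1 *: y else a i.
have ha' : orthonormal m.+1 a'.
  move=> i0 j0; rewrite !ltnS /a'.
  case: (eqVneq i0 m) => [->|im] /=; case: (eqVneq j0 m) => [->|jm] /= hi hj.
  - rewrite dotZl dotZr mulrA -invfM -expr2 /r sqrtCK mulVf //.
  - by rewrite dotZl dotC hay ?mulr0 ?eq_sym ?(negPf jm) // ltn_neqAle jm.
  - by rewrite dotZr hay ?mulr0 ?(negPf im) // ltn_neqAle im.
  - by rewrite ha // ltn_neqAle ?im ?jm.
have [|b [hb1 hb2]] := IH m.+1 a' _ ha'; first by rewrite addSnnS.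
exists b; split => // i lim; rewrite hb1 ?(ltnW lim) //.
  by rewrite /a' (ltn_eqF lim).
by rewrite ltnS ltnW.
Qed.

Lemma dual_basis (F : numClosedFieldType) k n (U : 'M[F]_(k, n)) :
  (forall c : 'rV[F]_k, c *m U = 0 -> c = 0) ->
  (k <= n)%N /\ exists Q : 'M[F]_(n, k), U *m Q = 1%:M.
Proof.
move=> Hc.
have rf : row_free U.
  rewrite -kermx_eq0; apply/eqP/row_matrixP => i; rewrite row0.
  by apply: Hc; rewrite -row_mul mulmx_ker row0.
split; last exact/row_freeP.
by move: rf; rewrite /row_free => /eqP <-; exact: rank_leq_col.
Qed.

Lemma diag_mul (F : numClosedFieldType) n (d e : 'rV[F]_n) :
  diag_mx d *m diag_mx e = diag_mx (\row_j (d 0 j * e 0 j)).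
Proof.
by apply/matrixP => i j; rewrite mul_diag_mx !mxE; case: (i == j); rewrite ?mulr1n ?mulr0n ?mulr0.
Qed.

Lemma perturb (F : numClosedFieldType) k n (U : 'M[F]_(k, n)) (Q : 'M[F]_(n, k)) (c : 'rV[F]_k) (s : F) :
  U *m Q = 1%:M -> U *m U^T = diag_mx c ->
  let E := diag_mx (\row_j ((c 0 j == 0)%:R : F)) in
  let P := E *m (Q^T - 2^-1 *: ((Q^T *m Q) *m E *m U)) in
  (U + s *: P) *m (U + s *: P)^T = diag_mx c + (2 * s) *: E.
Proof.
move=> UQ UU E P.
set G := Q^T *m Q.
set h : F := 2^-1.
set X := Q^T - h *: (G *m E *m U).
have PX : P = E *m X by [].
have Gdef : G = Q^T *m Q by [].
have Xdef : X = Q^T - h *: (G *m E *m U) by [].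
clearbody P.
have Et : E^T = E by rewrite tr_diag_mx.
have EE : E *m E = E.
  rewrite /E diag_mul; congr diag_mx; apply/rowP => j; rewrite !mxE.
  by case: (c 0 j == 0); rewrite ?mulr1 ?mulr0.
have DE : diag_mx c *m E = 0.
  rewrite /E diag_mul; apply/matrixP => i j; rewrite !mxE.
  case: (eqVneq (c 0 i) 0) => [->|ci]; first by rewrite mul0r mul0rn.
  by rewrite mulr0 mul0rn.
have ED : E *m diag_mx c = 0 by rewrite -Et -tr_diag_mx -trmx_mul DE trmx0.
have Gt : G^T = G by rewrite /G trmx_mul trmxK.
have QU : Q^T *m U^T = 1%:M by rewrite -trmx_mul UQ trmx1.
have h2 : h + h = 1 by rewrite /h; field.
clearbody X G h E.
have Xt : X^T = Q - h *: (U^T *m E *m G).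
  by rewrite Xdef linearB linearZ /= !trmx_mul Et Gt trmxK mulmxA.
have UX : U *m X^T = 1%:M.
  by rewrite Xt mulmxBr -scalemxAr !mulmxA UQ UU DE !mul0mx scaler0 subr0.
have XX : X *m X^T = G - h *: (E *m G + G *m E).
  rewrite Xt Xdef mulmxBl !mulmxBr -!scalemxAl -!scalemxAr.
  rewrite !mulmxA QU mul1mx -[G *m E *m U *m Q](mulmxA) UQ mulmx1.
  rewrite -[G *m E *m U *m U^T]mulmxA UU -[G *m E *m diag_mx c]mulmxA ED mulmx0 mul0mx.
  by rewrite mul0mx !scaler0 subr0 -Gdef scalerDr opprD addrA.
have UP : U *m P^T = E.
  by rewrite PX trmx_mul Et mulmxA UX mul1mx.
have PU : P *m U^T = E by rewrite -Et -UP trmx_mul trmxK.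
have PP : P *m P^T = 0.
  rewrite PX trmx_mul Et !mulmxA -[E *m X *m X^T]mulmxA XX.
  rewrite mulmxBr mulmxBl -scalemxAr -scalemxAl mulmxDr mulmxDl !mulmxA EE.
  rewrite -[E *m G *m E *m E]mulmxA EE scalerDr -scalerDl h2 scale1r subrr.
  by [].
rewrite linearD linearZ /= mulmxDl !mulmxDr -!scalemxAl -!scalemxAr UU UP PU PP.
rewrite !scaler0 addr0 -addrA; congr (_ + _).
by rewrite -scalerDl -mulr2n mulr_natl.
Qed.

Lemma normalize (F : numClosedFieldType) n k (ut : nat -> 'rV[F]_n) : (k <= n)%N ->
  (forall i j, (i < k)%N -> (j < k)%N -> i != j -> dot (ut i) (ut j) = 0) ->
  (forall j, (j < k)%N -> dot (ut j) (ut j) != 0) ->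
  exists (b : nat -> 'rV[F]_n) (lam : nat -> F),
    orthonormal n b /\ forall j, (j < k)%N -> ut j = lam j *: b j.
Proof.
move=> kn Ho Hn.
pose lam j := sqrtC (dot (ut j) (ut j)).
have l0 : forall j, (j < k)%N -> lam j != 0 by move=> j hj; rewrite sqrtC_eq0 Hn.
pose a j := (lam j)^-1 *: ut j.
have ha : orthonormal k a.
  move=> i j hi hj; rewrite /a dotZl dotZr.
  case: (eqVneq i j) => [<-|ij]; last by rewrite Ho // !mulr0.
  by rewrite mulrA -invfM -expr2 /lam sqrtCK mulVf // Hn.
have [b [hb1 hb2]] := @extend_orthonormal _ n (n - k) k a (subnKC kn) ha.
exists b, lam; split => // j hj; rewrite hb1 // /a scalerA mulfV ?scale1r //.
exact: l0.
Qed.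

Lemma trisum (F : numClosedFieldType) n k (f g h : nat -> nat -> F) (x y z : nat -> F) :
  \sum_(a < n) \sum_(b < n) \sum_(c < n)
     (\sum_(j < k) f j a * g j b * h j c) * x a * y b * z c =
  \sum_(j < k) (\sum_(a < n) f j a * x a) * (\sum_(b < n) g j b * y b) *
     (\sum_(c < n) h j c * z c).
Proof.
under eq_bigr => a _ do under eq_bigr => b _ do under eq_bigr => c _ do
  rewrite !mulr_suml.
under eq_bigr => a _ do under eq_bigr => b _ do rewrite exchange_big /=.
under eq_bigr => a _ do rewrite exchange_big /=.
rewrite exchange_big /=; apply: eq_bigr => j _.
rewrite !big_distrl /=; apply: eq_bigr => a _.
rewrite (big_distrr (f j a * x a)) /= big_distrl /=; apply: eq_bigr => b _.
rewrite big_distrr /=; apply: eq_bigr => c _.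
ring.
Qed.




Definition K := (Rdefinitions.R)[i].
Definition phi (z : Defs.C) : K := (re z +i* im z)%C.
Definition psi (x : K) : Defs.C := mkC (complex.Re x) (complex.Im x).
Lemma phiK x : phi (psi x) = x. Proof. by case: x. Qed.
Lemma psiK z : psi (phi z) = z. Proof. by case: z. Qed.
Lemma phi_inj : injective phi. Proof. exact: can_inj psiK. Qed.
Lemma phiD z w : phi (Cadd z w) = phi z + phi w. Proof. reflexivity. Qed.
Lemma phiM z w : phi (Cmul z w) = phi z * phi w. Proof. reflexivity. Qed.
Lemma phi0 : phi Defs.C0 = 0. Proof. reflexivity. Qed.
Lemma phi1 : phi Defs.C1 = 1. Proof. reflexivity. Qed.
Lemma phiN z : phi (Copp z) = - phi z. Proof. reflexivity. Qed.
Lemma phiB z w : phi (Csub z w) = phi z - phi w. Proof. reflexivity. Qed.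
Lemma phi_sum n f : phi (Csum n f) = \sum_(i < n) phi (f i).
Proof. elim: n => [|n IH] /=; first by rewrite big_ord0 phi0. by rewrite phiD IH big_ord_recr. Qed.

Definition rv n (x : vec) : 'rV[K]_n := \row_(i < n) phi (x i).
Definition mm n (A : mat) : 'M[K]_n := \matrix_(i < n, j < n) phi (A i j).

Lemma phi_bil n x y : phi (bil n x y) = dot (rv n x) (rv n y).
Proof. by rewrite /bil phi_sum dotE; apply: eq_bigr => i _; rewrite !mxE phiM. Qed.

Lemma phi_delta i j : phi (delta i j) = (i == j)%:R.
Proof.
rewrite /delta; case: (Nat.eqb_spec i j) => [->|ne]; first by rewrite eqxx phi1.
by rewrite (introF eqP ne) phi0.
Qed.

Lemma orth_mm n A : orthogonal_mat n A <-> (mm n A)^T *m mm n A = 1%:M.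
Proof.
split => [H|H].
  apply/matrixP => i j.
  have := congr1 phi (H i j (elimT ssrnat.ltP (ltn_ord i)) (elimT ssrnat.ltP (ltn_ord j))).
  rewrite phi_delta phi_sum !mxE => <-.
  apply: eq_bigr => l _; by rewrite !mxE phiM.
move=> i j /ssrnat.ltP hi /ssrnat.ltP hj; apply: phi_inj; rewrite phi_delta phi_sum.
have := congr1 (fun M : 'M[K]_n => M (Ordinal hi) (Ordinal hj)) H.
rewrite /= !mxE => <-; apply: eq_bigr => l _; by rewrite !mxE phiM.
Qed.

Lemma phi_mat_vec n A x i : phi (mat_vec n A x i) = \sum_(j < n) phi (A i j) * phi (x j).
Proof. by rewrite phi_sum; apply: eq_bigr => j _; rewrite phiM. Qed.

Lemma phi_trilin n T x y z : phi (trilin n T x y z) =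
  \sum_(a < n) \sum_(b < n) \sum_(c < n) phi (T a b c) * phi (x a) * phi (y b) * phi (z c).
Proof.
rewrite phi_sum; apply: eq_bigr => a _; rewrite phi_sum; apply: eq_bigr => b _.
by rewrite phi_sum; apply: eq_bigr => c _; rewrite !phiM.
Qed.

Lemma phi_diag_trilin n al x y z : phi (diag_trilin n al x y z) =
  \sum_(i < n) phi (al i) * phi (x i) * phi (y i) * phi (z i).
Proof. by rewrite phi_sum; apply: eq_bigr => i _; rewrite !phiM. Qed.

Lemma sum_delta n (f : nat -> K) a : (a < n)%N -> \sum_(i < n) f i * (i == a :> nat)%:R = f a.
Proof.
move=> ha; rewrite (bigD1 (Ordinal ha)) //= eqxx mulr1 big1 ?addr0 // => i.
by rewrite -val_eqE /= => /negPf ->; rewrite mulr0.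
Qed.

Lemma OT_repr n T : OT n T -> exists (A B Cm : mat) (al : vec),
  mm n A *m (mm n A)^T = 1%:M /\ mm n B *m (mm n B)^T = 1%:M /\
  mm n Cm *m (mm n Cm)^T = 1%:M /\
  forall a b c, (a < n)%N -> (b < n)%N -> (c < n)%N ->
    phi (T a b c) = \sum_(i < n) phi (al i) * phi (A i a) * phi (B i b) * phi (Cm i c).
Proof.
move=> [A [B [Cm [al [hA [hB [hC H]]]]]]].
exists A, B, Cm, al.
split; first by apply: mulmx1C; apply/orth_mm.
split; first by apply: mulmx1C; apply/orth_mm.
split; first by apply: mulmx1C; apply/orth_mm.
move=> a b c ha hb hc.
have := congr1 phi (H (fun i => delta i a) (fun i => delta i b) (fun i => delta i c)).
rewrite phi_trilin phi_diag_trilin.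
under eq_bigr => i _ do under eq_bigr => j _ do under eq_bigr => k _ do rewrite !phi_delta.
under eq_bigr => i _ do under eq_bigr => j _ do rewrite (sum_delta (fun k => phi (T i j k) * _ * _)) //.
under eq_bigr => i _ do rewrite (sum_delta (fun j => phi (T i j c) * _)) //.
rewrite (sum_delta (fun i => phi (T i b c))) // => ->.
apply: eq_bigr => i _; rewrite !phi_mat_vec.
under eq_bigr => j _ do rewrite phi_delta.
under [X in _ * _ * X * _]eq_bigr => j _ do rewrite phi_delta.
under [X in _ * _ * X]eq_bigr => j _ do rewrite phi_delta.
by rewrite (sum_delta (fun j => phi (A i j))) // (sum_delta (fun j => phi (B i j))) // (sum_delta (fun j => phi (Cm i j))).
Qed.

Definition ofv n (v : 'rV[K]_n) : vec :=
  fun a => match @insub nat (fun a => (a < n)%N) 'I_n a with Some o => psi (v 0 o) | None => Defs.C0 end.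

Lemma phi_ofv n (v : 'rV[K]_n) (a : 'I_n) : phi (ofv v a) = v 0 a.
Proof. by rewrite /ofv valK phiK. Qed.

Lemma sum_widen k n (F : nat -> K) : (k <= n)%N -> (forall i, (k <= i)%N -> F i = 0) ->
  \sum_(i < n) F i = \sum_(i < k) F i.
Proof.
move=> kn H; rewrite (big_ord_widen n F kn) [in RHS]big_mkcond /=; apply: eq_bigr => i _.
by case: ifP => // /negbT; rewrite -leqNgt => /H ->.
Qed.

Lemma OT_of_vectors n k (ut vt wt : nat -> vec) : (k <= n)%N ->
  (forall i j, (i < k)%N -> (j < k)%N -> i != j -> dot (rv n (ut i)) (rv n (ut j)) = 0) ->
  (forall j, (j < k)%N -> dot (rv n (ut j)) (rv n (ut j)) != 0) ->
  (forall i j, (i < k)%N -> (j < k)%N -> i != j -> dot (rv n (vt i)) (rv n (vt j)) = 0) ->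
  (forall j, (j < k)%N -> dot (rv n (vt j)) (rv n (vt j)) != 0) ->
  (forall i j, (i < k)%N -> (j < k)%N -> i != j -> dot (rv n (wt i)) (rv n (wt j)) = 0) ->
  (forall j, (j < k)%N -> dot (rv n (wt j)) (rv n (wt j)) != 0) ->
  OT n (fun a b c => Csum k (fun j => Cmul (Cmul (ut j a) (vt j b)) (wt j c))).
Proof.
move=> kn uo un vo vn wo wn.
have [bu [lu [bo ue]]] := normalize kn uo un.
have [bv [lv [bvo ve]]] := normalize kn vo vn.
have [bw [lw [bwo we]]] := normalize kn wo wn.
pose mk (b : nat -> 'rV[K]_n) : mat := fun i => ofv (b i).
have mkE : forall b, mm n (mk b) = \matrix_(i < n) b i.
  by move=> b; apply/matrixP => i j; rewrite !mxE /mk phi_ofv.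
have mko : forall b, orthonormal n b -> orthogonal_mat n (mk b).
  move=> b hb; apply/orth_mm; apply: mulmx1C; rewrite mkE.
  apply/matrixP => i j; rewrite mulmx_tr_dot !rowK hb // mxE.
  by [].
exists (mk bu), (mk bv), (mk bw).
exists (fun i => if (i < k)%N then psi (lu i * lv i * lw i) else Defs.C0).
split; first exact: mko.
split; first exact: mko.
split; first exact: mko.
move=> x y z; apply: phi_inj.
rewrite phi_trilin phi_diag_trilin.
have hT : forall a b c, phi (Csum k (fun j => Cmul (Cmul (ut j a) (vt j b)) (wt j c))) =
   \sum_(j < k) phi (ut j a) * phi (vt j b) * phi (wt j c).
  by move=> a b c; rewrite phi_sum; apply: eq_bigr => j _; rewrite !phiM.
under eq_bigr => a _ do under eq_bigr => b _ do under eq_bigr => c _ do rewrite hT.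
have tr := @trisum K n k (fun j a => phi (ut j a)) (fun j b => phi (vt j b)) (fun j c => phi (wt j c)) (fun a => phi (x a)) (fun b => phi (y b)) (fun c => phi (z c)).
cbv beta in tr; rewrite tr; clear tr.
rewrite (@sum_widen k n (fun i => phi (if (i < k)%N then psi (lu i * lv i * lw i) else Defs.C0) *
   phi (mat_vec n (mk bu) x i) * phi (mat_vec n (mk bv) y i) * phi (mat_vec n (mk bw) z i))) //; last first.
  by move=> i ki; rewrite leqNgt in ki; rewrite (negPf ki) phi0 !mul0r.
apply: eq_bigr => j _; rewrite ltn_ord phiK !phi_mat_vec.
have hu : forall a : 'I_n, phi (ut j a) = lu j * bu j 0 a.
  by move=> a; have := congr1 (fun v : 'rV[K]_n => v 0 a) (ue j (ltn_ord j)); rewrite /= !mxE.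
have hv : forall a : 'I_n, phi (vt j a) = lv j * bv j 0 a.
  by move=> a; have := congr1 (fun v : 'rV[K]_n => v 0 a) (ve j (ltn_ord j)); rewrite /= !mxE.
have hw : forall a : 'I_n, phi (wt j a) = lw j * bw j 0 a.
  by move=> a; have := congr1 (fun v : 'rV[K]_n => v 0 a) (we j (ltn_ord j)); rewrite /= !mxE.
under eq_bigr => a _ do rewrite hu -mulrA.
under [X in _ * X * _]eq_bigr => a _ do rewrite hv -mulrA.
under [X in _ * X]eq_bigr => a _ do rewrite hw -mulrA.
rewrite -!big_distrr /=.
have e1 : \sum_(j0 < n) phi (mk bu j j0) * phi (x j0) = \sum_(i < n) bu j 0 i * phi (x i).
  by apply: eq_bigr => a _; rewrite /mk phi_ofv.
have e2 : \sum_(j0 < n) phi (mk bv j j0) * phi (y j0) = \sum_(i < n) bv j 0 i * phi (y i).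
  by apply: eq_bigr => a _; rewrite /mk phi_ofv.
have e3 : \sum_(j0 < n) phi (mk bw j j0) * phi (z j0) = \sum_(i < n) bw j 0 i * phi (z i).
  by apply: eq_bigr => a _; rewrite /mk phi_ofv.
rewrite e1 e2 e3; ring.
Qed.

Lemma dot_suml n k (f : 'I_k -> 'rV[K]_n) y : dot (\sum_(j < k) f j) y = \sum_(j < k) dot (f j) y.
Proof. elim/big_rec2: _ => [|j a b _ H]; [exact: dot0l | by rewrite dotDl H]. Qed.

Lemma indep_of_orth n k (u : nat -> vec) :
  (forall i j, (i < k)%N -> (j < k)%N -> i != j -> dot (rv n (u i)) (rv n (u j)) = 0) ->
  (forall j, (j < k)%N -> dot (rv n (u j)) (rv n (u j)) != 0) ->
  lin_indep n k u.
Proof.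
move=> Ho Hn c Hc j0 /ssrnat.ltP hj0.
have S : \sum_(j < k) phi (c j) *: rv n (u j) = 0.
  apply/rowP => a; rewrite !mxE.
  have := congr1 phi (Hc a (elimT ssrnat.ltP (ltn_ord a))).
  rewrite phi_sum phi0 => <-; rewrite summxE; apply: eq_bigr => j _.
  by rewrite !mxE phiM.
have := congr1 (fun v => dot v (rv n (u j0))) S.
rewrite /= dot0l dot_suml (bigD1 (Ordinal hj0)) //= big1 ?addr0.
  rewrite dotZl => /eqP; rewrite mulf_eq0 (negPf (Hn _ hj0)) orbF => /eqP.
  by rewrite -phi0 => /phi_inj.
move=> j; rewrite -val_eqE /= => jj0; rewrite dotZl Ho ?mulr0 //.
Qed.

Lemma orth_of_dot n k (u : nat -> vec) :
  (forall i j, (i < k)%N -> (j < k)%N -> i != j -> dot (rv n (u i)) (rv n (u j)) = 0) ->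
  pairwise_orth n k u.
Proof.
move=> Ho i j /ssrnat.ltP hi /ssrnat.ltP hj ij; apply: phi_inj; rewrite phi_bil phi0 Ho //.
exact/eqP.
Qed.

Lemma rows_dot n (A : mat) : mm n A *m (mm n A)^T = 1%:M ->
  forall i j, (i < n)%N -> (j < n)%N -> dot (rv n (A i)) (rv n (A j)) = (i == j)%:R.
Proof.
move=> H i j hi hj.
have := congr1 (fun M : 'M[K]_n => M (Ordinal hi) (Ordinal hj)) H.
rewrite /= mulmx_tr_dot mxE.
have rr : forall l (hl : (l < n)%N), row (Ordinal hl) (mm n A) = rv n (A l).
  by move=> l hl; apply/rowP => m; rewrite !mxE.
by rewrite !rr.
Qed.

Lemma OT_ODECO n T : OT n T -> ODECO n T.
Proof.
move=> /OT_repr [A [B [Cm [al [hA [hB [hC HT]]]]]]].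
pose l := [seq i <- iota 0 n | phi (al i) != 0].
pose s j := nth 0%N l j.
have sl : forall j, (j < size l)%N -> (s j < n)%N /\ phi (al (s j)) != 0.
  move=> j hj; have := mem_nth 0%N hj; rewrite mem_filter mem_iota add0n => /andP[h1 /andP[_ h2]].
  by split.
have ul : uniq l by rewrite filter_uniq // iota_uniq.
have sinj : forall i j, (i < size l)%N -> (j < size l)%N -> i != j -> s i != s j.
  by move=> i j hi hj; apply: contra => /eqP; rewrite /s => /eqP; rewrite nth_uniq.
pose u j := fun a => Cmul (al (s j)) (A (s j) a).
have ru : forall j, rv n (u j) = phi (al (s j)) *: rv n (A (s j)).
  by move=> j; apply/rowP => a; rewrite !mxE phiM.
have ho : forall (M : mat), mm n M *m (mm n M)^T = 1%:M ->
    forall i j, (i < size l)%N -> (j < size l)%N -> i != j ->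
      dot (rv n (M (s i))) (rv n (M (s j))) = 0.
  move=> M hM i j hi hj ij; rewrite (rows_dot hM) ?(proj1 (sl _ _)) //.
  by rewrite (negPf (sinj _ _ hi hj ij)).
have hn : forall (M : mat), mm n M *m (mm n M)^T = 1%:M ->
    forall j, (j < size l)%N -> dot (rv n (M (s j))) (rv n (M (s j))) = 1.
  by move=> M hM j hj; rewrite (rows_dot hM) ?(proj1 (sl _ _)) // eqxx.
exists (size l), u, (fun j => B (s j)), (fun j => Cm (s j)).
split.
  apply: indep_of_orth => [i j hi hj ij|j hj]; rewrite !ru dotZl dotZr.
    by rewrite (ho _ hA) ?mulr0.
  by rewrite (hn _ hA) // mulr1 mulf_neq0 // (proj2 (sl _ _)).
split; first by apply: indep_of_orth => [i j hi hj ij|j hj]; [rewrite (ho _ hB) | rewrite (hn _ hB) // oner_neq0].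
split; first by apply: indep_of_orth => [i j hi hj ij|j hj]; [rewrite (ho _ hC) | rewrite (hn _ hC) // oner_neq0].
split; first by apply: orth_of_dot => i j hi hj ij; rewrite !ru dotZl dotZr (ho _ hA) ?mulr0.
split; first by apply: orth_of_dot => i j hi hj ij; rewrite (ho _ hB).
split; first by apply: orth_of_dot => i j hi hj ij; rewrite (ho _ hC).
move=> a b c /ssrnat.ltP ha /ssrnat.ltP hb /ssrnat.ltP hc; apply: phi_inj.
rewrite HT // phi_sum.
pose G i := phi (al i) * phi (A i a) * phi (B i b) * phi (Cm i c).
rewrite (eq_bigr (fun j : 'I_(size l) => G (s j))); last first.
  by move=> j _; rewrite /G !phiM.
transitivity (\sum_(i < n) G i); first by [].
rewrite -(big_mkord xpredT G) (bigID (fun i => phi (al i) != 0)) /=.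
rewrite [X in _ + X]big1 ?addr0; last by move=> i /negbNE/eqP; rewrite /G => ->; rewrite !mul0r.
rewrite -big_filter -/l (big_nth 0%N) big_mkord.
by rewrite /index_iota subn0.
Qed.

Lemma bisum n m (f : nat -> K) (g h : nat -> nat -> K) (p q : nat -> K) :
  \sum_(b < n) \sum_(c < n) (\sum_(i < m) f i * g i b * h i c) * p b * q c =
  \sum_(i < m) f i * (\sum_(b < n) g i b * p b) * (\sum_(c < n) h i c * q c).
Proof.
under eq_bigr => b _ do under eq_bigr => c _ do rewrite !mulr_suml.
under eq_bigr => b _ do rewrite exchange_big /=.
rewrite exchange_big /=; apply: eq_bigr => i _.
rewrite (big_distrr (f i)) big_distrl /=; apply: eq_bigr => b _.
rewrite big_distrr /=; apply: eq_bigr => c _.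
ring.
Qed.

Lemma sum_dot n (x y : vec) : \sum_(b < n) phi (x b) * phi (y b) = dot (rv n x) (rv n y).
Proof. by rewrite dotE; apply: eq_bigr => b _; rewrite !mxE. Qed.

Lemma sum_delta2 n (f : nat -> K) a : (a < n)%N ->
  \sum_(i < n) f i * (i == a :> nat)%:R * (i == a :> nat)%:R = f a.
Proof.
move=> ha; rewrite -(sum_delta f ha); apply: eq_bigr => i _.
by case: (i == a :> nat); rewrite ?mulr1 ?mulr0.
Qed.

Definition uu : vec := fun a => if Nat.eqb a 0 then Defs.C1 else if Nat.eqb a 1 then mkC 0 1 else Defs.C0.

Lemma contract n (T : tensor) (A B Cm : mat) (al : vec) :
  mm n B *m (mm n B)^T = 1%:M -> mm n Cm *m (mm n Cm)^T = 1%:M ->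
  (forall a b c, (a < n)%N -> (b < n)%N -> (c < n)%N ->
    phi (T a b c) = \sum_(i < n) phi (al i) * phi (A i a) * phi (B i b) * phi (Cm i c)) ->
  forall j a, (j < n)%N -> (a < n)%N ->
  \sum_(b < n) \sum_(c < n) phi (T a b c) * phi (B j b) * phi (Cm j c) = phi (al j) * phi (A j a).
Proof.
move=> hB hC HT j a hj ha.
under eq_bigr => b _ do under eq_bigr => c _ do rewrite HT //.
have := @bisum n n (fun i => phi (al i) * phi (A i a)) (fun i b => phi (B i b)) (fun i c => phi (Cm i c))
   (fun b => phi (B j b)) (fun c => phi (Cm j c)).
cbv beta => ->.
under eq_bigr => i _ do rewrite !sum_dot (rows_dot hB) // (rows_dot hC) //.
by rewrite (sum_delta2 (fun i => phi (al i) * phi (A i a))).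
Qed.


Lemma uu2 (b : nat) : phi (uu b) * phi (uu b) = (b == 0)%:R - (b == 1)%:R.
Proof.
rewrite /uu; case: (Nat.eqb_spec b 0) => [->|b0].
  by rewrite phi1 mulr1 /= subr0.
case: (Nat.eqb_spec b 1) => [->|b1].
  rewrite /= sub0r. 
  apply/eqP; rewrite eq_complex /=; apply/andP; split; apply/eqP.
  - by rewrite ?R0E ?R1E; ring.
  - by rewrite ?R0E ?R1E; ring.
by rewrite phi0 mulr0 (introF eqP b0) (introF eqP b1) subrr.
Qed.

Lemma dot_uu n : (2 <= n)%N -> dot (rv n uu) (rv n uu) = 0.
Proof.
move=> hn; rewrite -sum_dot.
under eq_bigr => b _ do rewrite uu2.
rewrite sumrB.
have h0 : (0 < n)%N by apply: leq_trans hn.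
have h1 : (1 < n)%N by [].
have := sum_delta (fun _ => 1) h0; have := sum_delta (fun _ => 1) h1.
under eq_bigr => b _ do rewrite mul1r.
under [X in _ = _ -> X = _ -> _]eq_bigr => b _ do rewrite mul1r.
by move=> -> ->; rewrite subrr.
Qed.

Lemma part3 n : (2 <= n)%N -> exists T, ODECO n T /\ ~ OT n T.
Proof.
move=> hn.
have h0 : (0 < n)%N by apply: leq_trans hn.
pose T : tensor := fun a b c => Cmul (Cmul (uu a) (uu b)) (uu c).
exists T; split.
  exists 1%N, (fun _ => uu), (fun _ => uu), (fun _ => uu).
  have li : lin_indep n 1 (fun _ => uu).
    move=> c Hc j /ssrnat.ltP; rewrite ltnS leqn0 => /eqP ->.
    have := congr1 phi (Hc 0%N (elimT ssrnat.ltP h0)).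
    rewrite phi_sum big_ord1 phiM /= phi1 mulr1 phi0 => E.
    by apply: phi_inj; rewrite E phi0.
  have po : pairwise_orth n 1 (fun _ => uu).
    move=> j j' /ssrnat.ltP h1 /ssrnat.ltP h2 ne; exfalso; apply: ne.
    by move: h1 h2; rewrite !ltnS !leqn0 => /eqP -> /eqP ->.
  do 6 (split => //).
  move=> a b c _ _ _; apply: phi_inj; by rewrite phi_sum big_ord1 !phiM.
move/OT_repr => [A [B [Cm [al [hA [hB [hC HT]]]]]]].
have al0 : forall j, (j < n)%N -> phi (al j) = 0.
  move=> j hj.
  pose be := (\sum_(b < n) phi (uu b) * phi (B j b)) * (\sum_(c < n) phi (uu c) * phi (Cm j c)).
  have vec : phi (al j) *: rv n (A j) = be *: rv n uu.
    apply/rowP => a; rewrite !mxE -(contract hB hC HT hj (ltn_ord a)).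
    transitivity (\sum_(b < n) \sum_(c < n) phi (uu a) * (phi (uu b) * phi (B j b)) * (phi (uu c) * phi (Cm j c))).
      by apply: eq_bigr => b _; apply: eq_bigr => c _; rewrite /T !phiM; ring.
    rewrite /be mulrC mulrA (big_distrr (phi (uu a))) big_distrl /=; apply: eq_bigr => b _.
    rewrite big_distrr /=; apply: eq_bigr => c _; ring.
  have := congr1 (fun v => dot v v) vec.
  rewrite /= !dotZl !dotZr dot_uu // (rows_dot hA) // eqxx !mulr0 mulr1 => /eqP.
  by rewrite mulf_eq0 orbb => /eqP.
have := HT 0%N 0%N 0%N h0 h0 h0.
rewrite big1; last by move=> i _; rewrite al0 // !mul0r.
rewrite /T !phiM /uu /= phi1 !mulr1 => /eqP; by rewrite oner_eq0.
Qed.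

Definition pt (u p : nat -> vec) (s : R) : nat -> vec :=
  fun j a => Cadd (u j a) (Cmul (mkC s 0) (p j a)).

Definition pm k n (P : 'M[K]_(k, n)) : nat -> vec :=
  fun j a => match @insub nat (fun j => (j < k)%N) 'I_k j with Some o => ofv (row o P) a | None => Defs.C0 end.

Lemma phi_s_neq0 (s : R) : s <> 0%R -> phi (mkC s 0) != 0.
Proof.
move=> hs; apply/negP => /eqP h; apply: hs.
have := congr1 psi h; rewrite psiK => h2; have := congr1 re h2; by [].
Qed.

Lemma perturb_family n k (u : nat -> vec) : lin_indep n k u -> pairwise_orth n k u ->
  (k <= n)%N /\ exists p : nat -> vec, forall s : R, s <> 0%R ->
    (forall i j, (i < k)%N -> (j < k)%N -> i != j -> dot (rv n (pt u p s i)) (rv n (pt u p s j)) = 0) /\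
    (forall j, (j < k)%N -> dot (rv n (pt u p s j)) (rv n (pt u p s j)) != 0).
Proof.
move=> Hli Hpo.
pose U : 'M[K]_(k, n) := \matrix_(j < k, a < n) phi (u j a).
have rowU : forall j : 'I_k, row j U = rv n (u j).
  by move=> j; apply/rowP => a; rewrite !mxE.
have indep : forall c : 'rV[K]_k, c *m U = 0 -> c = 0.
  move=> c hc; apply/rowP => j; rewrite [RHS]mxE -(phi_ofv c j).
  rewrite (Hli (ofv c)) ?phi0 //; last exact: (elimT ssrnat.ltP (ltn_ord j)).
  move=> a /ssrnat.ltP ha; apply: phi_inj; rewrite phi_sum phi0.
  transitivity ((c *m U) 0 (Ordinal ha)); last by rewrite hc mxE.
  by rewrite mxE; apply: eq_bigr => i _; rewrite phiM phi_ofv mxE.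
have [kn [Q UQ]] := dual_basis indep.
pose cv := \row_j dot (row j U) (row j U).
have UU : U *m U^T = diag_mx cv.
  apply/matrixP => i j; rewrite mulmx_tr_dot !mxE.
  case: (eqVneq i j) => [->|ij]; first by rewrite mulr1n.
  rewrite mulr0n !rowU -phi_bil Hpo ?phi0 //.
  - exact: (elimT ssrnat.ltP (ltn_ord i)).
  - exact: (elimT ssrnat.ltP (ltn_ord j)).
  - by move=> e; move: ij; rewrite (ord_inj e) eqxx.
split => //.
pose E := diag_mx (\row_j ((cv 0 j == 0)%:R : K)).
pose P := E *m (Q^T - 2^-1 *: ((Q^T *m Q) *m E *m U)).
exists (pm P) => s hs.
have key := perturb (phi (mkC s 0)) UQ UU.
rewrite -/E -/P in key.
have rowt : forall j : 'I_k, rv n (pt u (pm P) s j) = row j (U + phi (mkC s 0) *: P).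
  move=> j; apply/rowP => a; rewrite !mxE phiD phiM /pm valK phi_ofv !mxE.
  by [].
have dd : forall i j : 'I_k, dot (rv n (pt u (pm P) s i)) (rv n (pt u (pm P) s j)) =
    (diag_mx cv + (2 * phi (mkC s 0)) *: E) i j.
  by move=> i j; rewrite !rowt -mulmx_tr_dot key.
split.
  move=> i j hi hj ij.
  have -> : i = Ordinal hi by []. have -> : j = Ordinal hj by [].
  rewrite dd !mxE.
  have -> : (Ordinal hi == Ordinal hj) = false by apply/negbTE.
  by rewrite !mulr0n mulr0 addr0.
move=> j hj; have -> : j = Ordinal hj by [].
rewrite dd !mxE eqxx !mulr1n.
case: (eqVneq (dot (row (Ordinal hj) U) (row (Ordinal hj) U)) 0) => [->|c0]; last by rewrite mulr0 addr0.
by rewrite add0r mulr1 mulf_neq0 ?pnatr_eq0 // phi_s_neq0.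

Qed.

Lemma pt0 (u p : nat -> vec) j a : pt u p 0 j a = u j a.
Proof. by apply: phi_inj; rewrite /pt phiD phiM mul0r addr0. Qed.

Lemma contC_pt (u p : nat -> vec) j a : contC (fun s => pt u p s j a).
Proof.
apply: (contC_add (fun _ => u j a) (fun s => Cmul (mkC s 0) (p j a))); first exact: contC_const.
apply: (contC_mul (fun s => mkC s 0) (fun _ => p j a)); [exact: contC_id | exact: contC_const].
Qed.

Lemma ODECO_closure n T : ODECO n T -> in_closure n (OT n) T.
Proof.
move=> [k [u [v [w [liu [liv [liw [pou [pov [pow HT]]]]]]]]]] eps he.
have [kn [pu Hu]] := perturb_family liu pou.
have [_ [pv Hv]] := perturb_family liv pov.
have [_ [pw Hw]] := perturb_family liw pow.
pose Ts (s : R) : tensor := fun a b c =>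
  Csum k (fun j => Cmul (Cmul (pt u pu s j a) (pt v pv s j b)) (pt w pw s j c)).
have hc : forall a b c, contC (fun s => Ts s a b c).
  move=> a b c; apply: contC_sum => j.
  apply: (contC_mul (fun s => Cmul (pt u pu s j a) (pt v pv s j b)) (fun s => pt w pw s j c)); last exact: contC_pt.
  apply: (contC_mul (fun s => pt u pu s j a) (fun s => pt v pv s j b)); exact: contC_pt.
have h0 : forall a b c, (a < n)%coq_nat -> (b < n)%coq_nat -> (c < n)%coq_nat -> Ts 0%R a b c = T a b c.
  move=> a b c ha hb hc'; rewrite HT //; apply: phi_inj; rewrite !phi_sum.
  by apply: eq_bigr => j _; rewrite !pt0.
have [s [hs hd]] := @tdist_small n T Ts hc h0 eps he.
exists (Ts s); split => //.
have [hu1 hu2] := Hu s hs.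
have [hv1 hv2] := Hv s hs.
have [hw1 hw2] := Hw s hs.
exact: OT_of_vectors.
Qed.

Theorem theorem47 : forall n : nat, (2 <= n)%coq_nat ->
  (forall T : tensor, OT n T -> ODECO n T) /\
  (forall T : tensor, ODECO n T -> in_closure n (OT n) T) /\
  (exists T : tensor, ODECO n T /\ ~ OT n T).
Proof.
move=> n hn; split; first exact: OT_ODECO.
split; first exact: ODECO_closure.
exact: (part3 (introT ssrnat.leP hn)).
Qed.
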